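(* Let $s$ and $n$ be positive integers, let $f:\mathbb{N}\to\mathbb{C}$ be an arithmetical function, and let $f'(k)=\sum_{d\mid k}\mu(d)f(k/d)$. If $$\sum_{q=1}^{\infty}\sum_{m=1}^{\infty}\frac{|f'(mq)|}{(mq)^s}\,\bigl|c_q^{(s)}(n^s)\bigr|<\infty,$$ then $$\sum_{k=1}^{\infty}2^{\omega(k)}\frac{|f'(k)|}{k^s}<\infty .$$
   Context: For positive integers $a,b,s$, the generalized gcd $(a,b)_s$ is the largest $d^s$ ($d\in\mathbb{N}$) such that $d^s\mid a$ and $d^s\mid b$. The Cohen–Ramanujan sum is defined for positive integers $q,n,s$ by $$c_q^{(s)}(n)=\sum_{\substack{h=1\\ (h,q^s)_s=1}}^{q^s} e^{2\pi i n h/q^s}.$$ $\mu$ is the Möbius function and $\omega(k)$ is the number of distinct prime divisors of $k$. *)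

(* Defs.v *)
From HB Require Import structures.
From mathcomp Require Import all_boot all_order all_algebra.
From mathcomp Require Import all_classical all_reals all_analysis.
From mathcomp Require Import complex.

Set Implicit Arguments.
Unset Strict Implicit.
Unset Printing Implicit Defensive.

Import Order.TTheory GRing.Theory Num.Theory.

Local Open Scope ring_scope.

(* Möbius function. mu 0 := 0 (never used). *)
Definition moebius (k : nat) : int :=
  if k == 0%N then 0
  else if all (fun p => logn p k <= 1)%N (primes k)
       then (-1) ^+ size (primes k) else 0.

Definition omega (k : nat) : nat := size (primes k).

(* Generalized gcd (a,b)_s: the largest d^s (d in N) with d^s | a and d^s | b
   (for a, b positive, such d satisfy d <= a, so the bounded max is exact). *)
Definition gen_gcd (s a b : nat) : nat :=
  ((\max_(d < (a + b).+1 | (0 < (d : nat)) && ((d : nat) ^ s %| a) && ((d : nat) ^ s %| b)) (d : nat)) ^ s)%N.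

Definition expi2pi {R : realType} (x : R) : R[i] :=
  (cos (2 * pi * x) +i* sin (2 * pi * x))%C.

Definition cohen_ramanujan {R : realType} (s q n : nat) : R[i] :=
  \sum_(1 <= h < (q ^ s).+1 | gen_gcd s h (q ^ s) == 1%N)
     expi2pi ((n * h)%:R / (q ^ s)%:R : R).

Definition fprime {R : realType} (f : nat -> R[i]) (k : nat) : R[i] :=
  \sum_(d <- divisors k) (moebius d)%:~R * f (k %/ d)%N.

Definition cabs {R : realType} (z : R[i]) : R := Normc.normc z.

(* Main.v *)
Require Import Defs.
From HB Require Import structures.
From mathcomp Require Import all_boot all_order all_algebra.
From mathcomp Require Import all_classical all_reals all_analysis.
From mathcomp Require Import complex.
From mathcomp Require Import ring lra zify.
Import Order.TTheory GRing.Theory Num.Theory.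

Module T1.
Local Open Scope ring_scope.
Local Open Scope complex_scope.

Section E.
Variable R : realType.
Local Notation e := (@expi2pi R).

Lemma expiD (x y : R) : e (x + y) = e x * e y.
Proof.
rewrite /expi2pi mulrDr cosD sinD; simpc; congr (_ +i* _); ring.
Qed.

Lemma expi0 : e 0 = 1.
Proof. by rewrite /expi2pi mulr0 cos0 sin0. Qed.

Lemma expi1 : e 1 = 1.
Proof.
rewrite /expi2pi mulr1 (_ : 2 * pi = pi *+ 2) ?cos2pi ?sin2pi //.
by rewrite mulr_natl.
Qed.

Lemma expiMn (k : nat) (x : R) : e (k%:R * x) = e x ^+ k.
Proof.
elim: k => [|k IH]; first by rewrite mul0r expi0 expr0.
by rewrite -addn1 natrD mulrDl mul1r expiD IH addn1 exprSr.
Qed.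

Lemma expi_nat (k : nat) : e k%:R = 1.
Proof. by rewrite -[k%:R]mulr1 expiMn expi1 expr1n. Qed.

Lemma expiDn (x : R) (k : nat) : e (x + k%:R) = e x.
Proof. by rewrite expiD expi_nat mulr1. Qed.

End E.

End T1.
Import T1.

Module T2.

Definition good (s q h : nat) : bool := all (fun p => ~~ (p ^ s %| h)) (primes q).

Lemma gen_gcd_good (s q h : nat) : 0 < s -> 0 < q -> 0 < h ->
  (gen_gcd s h (q ^ s) == 1) = good s q h.
Proof.
move=> s0 q0 h0.
rewrite /gen_gcd -{2}(exp1n s) eqn_exp2r //.
pose P := fun d : 'I_(h + q ^ s).+1 => [&& (0 < d)%N, (d ^ s %| h)%N & (d ^ s %| q ^ s)%N].
rewrite (eq_bigl P); last by move=> d; rewrite /P andbA.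
have P1 : (1 < (h + q ^ s).+1)%N by rewrite ltnS addn_gt0 h0.
have HP1 : P (Ordinal P1) by rewrite /P /= !exp1n !dvd1n.
apply/idP/idP.
- move/eqP=> Hmax; apply/allP => p; rewrite mem_primes => /and3P [pp _ pq].
  apply/negP => phs.
  have pP : (p < (h + q ^ s).+1)%N.
    rewrite ltnS; apply: (leq_trans _ (leq_addr _ _)).
    apply: (leq_trans _ (dvdn_leq h0 phs)).
    by rewrite -[X in (X <= _)%N]expn1 leq_pexp2l ?(prime_gt0 pp).
  have : (p <= 1)%N.
    rewrite -Hmax; apply: (@leq_bigmax_cond _ P (fun d => nat_of_ord d) (Ordinal pP)).
    by rewrite /P /= prime_gt0 // phs dvdn_exp2r.
  by rewrite leqNgt prime_gt1.
- move/allP=> Hg; rewrite eqn_leq; apply/andP; split; last first.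
    exact: (leq_bigmax_cond (Ordinal P1)).
  apply/bigmax_leqP => d; rewrite /P /= => /and3P [d0 dh dq].
  rewrite leqNgt; apply/negP => d1.
  have pd := pdiv_dvd d; have pp := pdiv_prime d1.
  have dq' : (d %| q)%N by rewrite -(dvdn_pexp2r _ _ s0).
  have := Hg (pdiv d); rewrite mem_primes pp q0 (dvdn_trans pd dq') => /(_ isT).
  by rewrite (dvdn_trans (dvdn_exp2r s pd) dh).
Qed.

End T2.
Import T2.

Module T3.


Lemma good_mod s q h : good s q (h %% q ^ s) = good s q h.
Proof.
apply/allP/allP => H p pq; have := H p pq;
  have pqs : (p ^ s %| q ^ s)%N by apply: dvdn_exp2r; move: pq; rewrite mem_primes => /and3P[].
- by rewrite /dvdn modn_dvdm.
- by rewrite /dvdn modn_dvdm.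
Qed.

Lemma good0 s q : good s q 0 = (primes q == [::]).
Proof.
rewrite /good; case: (primes q) => [|p l] //=.
by rewrite dvdn0.
Qed.

Section C.
Variable R : realType.
Local Open Scope ring_scope.

Definition Cs (s N q : nat) : R[i] :=
  \sum_(0 <= h < q ^ s | good s q h) expi2pi ((N * h)%:R / (q ^ s)%:R : R).

Lemma cohen_eq (s N q : nat) : (0 < s)%N -> (0 < q)%N ->
  cohen_ramanujan s q N = Cs s N q.
Proof.
move=> s0 q0; rewrite /cohen_ramanujan /Cs.
have M0 : (0 < q ^ s)%N by rewrite expn_gt0 q0.
rewrite big_nat_cond (eq_bigl (fun h => (1 <= h < (q ^ s).+1)%N && good s q h)); last first.
  move=> h /=; case: (boolP (1 <= h < (q ^ s).+1)%N) => //= /andP [h0 _].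
  by rewrite gen_gcd_good.
rewrite -big_nat_cond big_mkcond [RHS]big_mkcond /= big_nat_recr //= [RHS](big_ltn M0) /=.
rewrite addrC; congr (_ + _).
have -> : good s q (q ^ s) = good s q 0 by rewrite -good_mod modnn.
rewrite muln0 mul0r natrM -mulrA divff ?mulr1 ?expi_nat ?expi0 //.
by rewrite pnatr_eq0 -lt0n.
Qed.

End C.

End T3.
Import T3.

Module T4.

Lemma mul_cancel_mod A B i i' : coprime A B -> (i < A)%N -> (i' < A)%N ->
  i * B = i' * B %[mod A] -> i = i'.
Proof.
move=> cAB.
wlog le : i i' / (i' <= i)%N.
  move=> H iA i'A E; case: (leqP i' i) => h; first exact: H.
  by apply/esym/H => //; apply: ltnW.
move=> iA i'A /eqP; rewrite eqn_mod_dvd ?leq_mul2r ?le ?orbT // -mulnBl.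
rewrite Gauss_dvdl //.
case: (posnP (i - i')) => [|h]; first by lia.
move/(dvdn_leq h) => h2; lia.
Qed.

Arguments mul_cancel_mod {A B i i'}.

Lemma good_mul s a b h : (0 < a)%N -> (0 < b)%N ->
  good s (a * b) h = good s a h && good s b h.
Proof.
move=> a0 b0; rewrite /good -all_cat; apply: eq_all_r => p.
by rewrite mem_cat primesM.
Qed.

Lemma good_shift s a b i j : (0 < a)%N -> coprime a b ->
  good s a (i * b ^ s + j * a ^ s) = good s a i.
Proof.
move=> a0 cab; apply: eq_in_all => p; rewrite mem_primes => /and3P [pp _ pa].
rewrite dvdn_addl; last by apply: dvdn_mull; apply: dvdn_exp2r.
rewrite Gauss_dvdl //; apply: coprimeXl; apply: coprimeXr.
rewrite prime_coprime //; apply/negP => pb.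
have : (p %| gcdn a b)%N by rewrite dvdn_gcd pa pb.
by rewrite (eqP cab) dvdn1 => /eqP p1; move: pp; rewrite p1.
Qed.

Section C.
Variable R : realType.
Local Open Scope ring_scope.

Lemma expi_mod (N k M : nat) : (0 < M)%N ->
  expi2pi ((N * (k %% M))%:R / M%:R : R) = expi2pi ((N * k)%:R / M%:R).
Proof.
move=> M0.
have M0' : (M%:R : R) != 0 by rewrite pnatr_eq0 -lt0n.
have -> : ((N * k)%:R / M%:R : R) = (N * (k %% M))%:R / M%:R + (N * (k %/ M))%:R.
  rewrite {1}(divn_eq k M) mulnDr natrD mulrDl addrC; congr (_ + _).
  by rewrite mulnA natrM mulfK.
by rewrite expiDn.
Qed.

Lemma Cs_mul (s N a b : nat) : (0 < a)%N -> (0 < b)%N -> coprime a b ->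
  Cs R s N (a * b) = Cs R s N a * Cs R s N b.
Proof.
move=> a0 b0 cab.
set A := (a ^ s)%N; set B := (b ^ s)%N.
have A0 : (0 < A)%N by rewrite expn_gt0 a0.
have B0 : (0 < B)%N by rewrite expn_gt0 b0.
have AB0 : (0 < A * B)%N by rewrite muln_gt0 A0 B0.
have cAB : coprime A B by apply: coprimeXl; apply: coprimeXr.
rewrite /Cs expnMn -/A -/B !big_mkcond /= !big_mkord.
rewrite big_distrlr /= pair_big /= [RHS]big_mkcond /=.
pose phi := fun ij : 'I_A * 'I_B =>
  Ordinal (ltn_pmod (ij.1 * B + ij.2 * A) AB0).
have cBA : coprime B A by rewrite coprime_sym.
have phi_inj : injective phi.
  move=> [i j] [i' j'] /(congr1 val) /= /eqP.
  rewrite chinese_remainder // => /andP [/eqP E1 /eqP E2].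
  have ei : i = i' :> nat.
    apply: (mul_cancel_mod cAB (ltn_ord i) (ltn_ord i')).
    by move: E1; rewrite ![(_ * B + _)%N]addnC !modnMDl.
  have ej : j = j' :> nat.
    apply: (mul_cancel_mod (cBA) (ltn_ord j) (ltn_ord j')).
    by move: E2; rewrite !modnMDl.
  by congr (_, _); apply: val_inj.
have phi_bij : bijective phi.
  by apply: (inj_card_bij phi_inj); rewrite card_prod !card_ord.
rewrite (reindex phi (onW_bij _ phi_bij)) /=.
apply: eq_bigr => [[i j]] _ /=.
have cba : coprime b a by rewrite coprime_sym.
rewrite expi_mod // /A /B -expnMn good_mod good_mul // good_shift //.
rewrite addnC good_shift // -/A -/B.
case: (good s a i) (good s b j) => [] [] //=.
rewrite -expiD; congr expi2pi.
have A0' : (A%:R : R) != 0 by rewrite pnatr_eq0 -lt0n.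
have B0' : (B%:R : R) != 0 by rewrite pnatr_eq0 -lt0n.
rewrite expnMn -/A -/B !natrM natrD !natrM.
by field; rewrite A0' B0'.
Qed.
End C.

End T4.
Import T4.

Module T5.

Section N.
Variable R : realType.
Local Open Scope ring_scope.
Local Open Scope complex_scope.

Lemma cabs_norm (z : R[i]) : (cabs z)%:C = `|z|.
Proof. by case: z. Qed.

Lemma cabs_ge0 (z : R[i]) : 0 <= cabs z.
Proof. rewrite -lecR cabs_norm; exact: normr_ge0. Qed.

Lemma cabsM (z w : R[i]) : cabs (z * w) = cabs z * cabs w.
Proof. exact: Normc.normcM. Qed.

Lemma sum_sub (T : eqType) (s1 s2 : seq T) (F : T -> R) :
  uniq s1 -> uniq s2 -> {subset s1 <= s2} -> (forall x, 0 <= F x) ->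
  \sum_(x <- s1) F x <= \sum_(x <- s2) F x.
Proof.
move=> u1 u2 sub F0.
rewrite [leRHS](bigID (fun x => x \in s1)) /=.
have -> : \sum_(i <- s2 | i \in s1) F i = \sum_(x <- s1) F x.
  rewrite -big_filter; apply: perm_big.
  apply: uniq_perm => //; first exact: filter_uniq.
  by move=> x; rewrite mem_filter; case: (boolP (x \in s1)) => // /sub ->.
by rewrite lerDl sumr_ge0.
Qed.

Lemma Cs1 s N : Cs R s N 1 = 1.
Proof.
by rewrite /Cs exp1n big_mkcond big_nat1 /= muln0 mul0r expi0.
Qed.

Lemma Cs_prime s N p : (0 < s)%N -> prime p -> 1 <= cabs (Cs R s N p).
Proof.
move=> s0 pp.
set P := (p ^ s)%N.
have P1 : (1 < P)%N.
  by rewrite -(exp1n s) ltn_exp2r // prime_gt1.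
have P0 : (0 < P)%N by apply: ltnW.
set z := expi2pi (N%:R / P%:R : R).
have ez : forall h, expi2pi ((N * h)%:R / P%:R : R) = z ^+ h.
  by move=> h; rewrite -expiMn natrM mulrCA mulrA.
pose S := \sum_(0 <= h < P) expi2pi ((N * h)%:R / P%:R : R).
have CS : S = 1 + Cs R s N p.
  rewrite /S /Cs -/P big_ltn // muln0 mul0r expi0; congr (_ + _).
  have gp : forall h, good s p h = ~~ (P %| h)%N.
    by move=> h; rewrite /good primes_prime // all_seq1.
  rewrite (big_ltn_cond P0) gp dvdn0 /= big_nat_cond [RHS]big_nat_cond.
  apply: eq_bigl => h; rewrite gp.
  case: (boolP (1 <= h < P)%N) => [/andP [h1 hP]|]; last by rewrite !andFb.
  rewrite !andTb; apply/esym/negP => /(dvdn_leq h1); lia.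
have zS : (z - 1) * S = 0.
  rewrite /S big_mkord (eq_bigr (fun i : 'I_P => z ^+ i)); last by move=> i _; exact: ez.
  rewrite -subrX1 -ez natrM mulfK ?expi_nat ?subrr //.
  by rewrite pnatr_eq0 -lt0n.
rewrite -lecR cabs_norm.
have -> : Cs R s N p = S - 1 by rewrite CS addrC addKr.
move/eqP: zS; rewrite mulf_eq0 => /orP [|/eqP ->]; last first.
  by rewrite sub0r normrN normr1.
rewrite subr_eq0 => /eqP z1.
have -> : S = P%:R.
  rewrite /S (eq_big_nat _ _ (F2 := fun=> 1)); last by move=> i _; rewrite ez z1 expr1n.
  by rewrite sumr_const_nat subn0.
rewrite -(natrB _ (ltnW P1)) normr_nat ler1n subn_gt0 //.
Qed.

End N.

End T5.
Import T5.

Module T6.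

Section D.
Variable R : realType.
Local Open Scope ring_scope.

Lemma omega_split p m a : prime p -> (0 < m)%N -> ~~ (p %| m)%N -> (0 < a)%N ->
  omega (m * p ^ a) = (omega m).+1.
Proof.
move=> pp m0 pm a0; rewrite /omega.
have -> : (omega m).+1 = size (p :: primes m) by [].
apply: perm_size; apply: uniq_perm; first exact: primes_uniq.
  by rewrite /= primes_uniq andbT mem_primes pp m0.
move=> x; rewrite primesM ?expn_gt0 ?(prime_gt0 pp) // primesX // (primes_prime pp).
by rewrite mem_seq1 in_cons orbC.
Qed.

Lemma D_bound s N k : (0 < s)%N -> (0 < k)%N ->
  (2 ^ omega k)%:R <= \sum_(q <- divisors k) cabs (Cs R s N q).
Proof.
move=> s0; have [n] := ubnP k; elim: n k => // n IH k kn k0.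
case: (leqP k 1) => k1.
  have -> : k = 1%N by lia.
  by rewrite /omega /= big_seq1 Cs1 /cabs Normc.normc1.
have pp := pdiv_prime k1; set p := pdiv k in pp *.
have [m cpm km] := pfactor_coprime pp k0.
set a := logn p k in km.
have a0 : (0 < a)%N by rewrite logn_gt0 mem_primes pp k0 pdiv_dvd.
have m0 : (0 < m)%N by move: k0; rewrite km muln_gt0 => /andP [].
have pm : ~~ (p %| m)%N by rewrite -prime_coprime.
have p1 := prime_gt1 pp.
have mk : (m < k)%N.
  rewrite km -{1}(muln1 m) ltn_mul2l m0 /=.
  by apply: (leq_trans p1); rewrite -[X in (X <= _)%N]expn1 leq_pexp2l ?(prime_gt0 pp).
have IHm := IH m (leq_trans mk (ltnSE kn)) m0.
rewrite km omega_split // expnS natrM.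
pose s1 := divisors m ++ map (muln p) (divisors m).
have minj : injective (muln p).
  by move=> x y /(congr1 (divn^~ p)) /=; rewrite !mulKn ?prime_gt0.
have le1 : \sum_(q <- s1) cabs (Cs R s N q) <=
    \sum_(q <- divisors (m * p ^ a)) cabs (Cs R s N q).
  apply: sum_sub; last by move=> x; apply: cabs_ge0.
  - rewrite cat_uniq divisors_uniq map_inj_uniq // divisors_uniq andbT /=.
    apply/hasPn => x /mapP [y ym ->]; rewrite -dvdn_divisors //.
    by apply/negP => /(dvdn_trans (dvdn_mulr y (dvdnn p))); apply/negP.
  - exact: divisors_uniq.
  - have k0' : (0 < m * p ^ a)%N by rewrite muln_gt0 m0 expn_gt0 (prime_gt0 pp).
    move=> x xs; rewrite -dvdn_divisors //.
    move: xs; rewrite mem_cat => /orP [|/mapP [y ym ->]].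
      by rewrite -dvdn_divisors // => xm; apply: dvdn_mulr.
    rewrite mulnC; apply: dvdn_mul; first by rewrite dvdn_divisors.
    by rewrite -{1}(expn1 p) dvdn_exp2l.
apply: le_trans le1.
rewrite big_cat big_map /=.
have -> : \sum_(j <- divisors m) cabs (Cs R s N (p * j)) =
          cabs (Cs R s N p) * \sum_(q <- divisors m) cabs (Cs R s N q).
  rewrite big_distrr /=; apply: eq_big_seq => j jm.
  rewrite -dvdn_divisors // in jm.
  rewrite Cs_mul ?(prime_gt0 pp) ?cabsM //; first exact: (dvdn_gt0 m0 jm).
  exact: (coprime_dvdr jm cpm).
have Cp := @Cs_prime R s N p s0 pp.
set X := \sum_(q <- divisors m) _ in IHm *.
have X0 : 0 <= X by apply: le_trans IHm.
rewrite [2%:R * _]mulrC mulr_natr mulr2n lerD //.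
by rewrite -[X in X <= _]mul1r ler_pM // ler0n.
Qed.

End D.

End T6.
Import T6.

Module T7.

Section F.
Variable R : realType.
Local Open Scope ring_scope.

Lemma fin_bound (s N K : nat) (a : nat -> R) : (0 < s)%N -> (forall k, 0 <= a k) ->
  \sum_(1 <= k < K) (2 ^ omega k)%:R * a k <=
  \sum_(1 <= q < K) \sum_(1 <= m < K) a (m * q)%N * cabs (cohen_ramanujan s q N).
Proof.
move=> s0 a0.
have c0 : forall q, 0 <= cabs (Cs R s N q) by move=> q; apply: cabs_ge0.
apply: (@le_trans _ _ (\sum_(1 <= k < K) \sum_(q <- index_iota 1 K | (q %| k)%N)
           a k * cabs (Cs R s N q))).
  rewrite big_nat [leRHS]big_nat; apply: ler_sum => k /andP [k1 kK].
  rewrite -big_distrr /= [leRHS]mulrC; apply: ler_wpM2r => //.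
  apply: (le_trans (@D_bound R s N k s0 k1)).
  rewrite -big_filter le_eqVlt; apply/orP; left; apply/eqP; apply: perm_big.
  apply: uniq_perm; first exact: divisors_uniq.
    by apply: filter_uniq; apply: iota_uniq.
  move=> x; rewrite mem_filter mem_iota -dvdn_divisors //.
  case: (boolP (x %| k)%N) => //= xk.
  have := dvdn_leq k1 xk; have := dvdn_gt0 k1 xk; lia.
rewrite (exchange_big_dep xpredT) //=.
rewrite !big_nat; apply: ler_sum => q /andP [q1 qK].
have -> : \sum_(1 <= m < K) a (m * q)%N * cabs (cohen_ramanujan s q N) =
          \sum_(x <- map (fun m => m * q)%N (index_iota 1 K)) a x * cabs (Cs R s N q).
  by rewrite big_map; apply: eq_bigr => m _; rewrite cohen_eq.
rewrite -big_filter; apply: sum_sub.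
- by apply: filter_uniq; apply: iota_uniq.
- rewrite map_inj_uniq ?iota_uniq //.
  by move=> x y /eqP; rewrite eqn_mul2r eqn0Ngt q1 /= => /eqP.
- move=> x; rewrite mem_filter mem_iota => /andP [qx /andP [x1 xK]].
  apply/mapP; exists (x %/ q)%N; last by rewrite divnK.
  rewrite mem_iota; apply/andP; split.
    by rewrite divn_gt0 // dvdn_leq.
  have := leq_div x q; lia.
- by move=> x; rewrite mulr_ge0.
Qed.

End F.

End T7.
Import T7.

Local Open Scope ring_scope.

Theorem theorem5 (R : realType) (s n : nat) (hs : (0 < s)%N) (hn : (0 < n)%N)
  (f : nat -> R[i]) :
  (\sum_(1 <= q <oo)
     (\sum_(1 <= m <oo)
        ((cabs (fprime f (m * q)) / ((m * q) ^ s)%:R)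
          * cabs (cohen_ramanujan s q (n ^ s)))%:E) < +oo)%E ->
  (\sum_(1 <= k <oo)
     ((2 ^ omega k)%:R * cabs (fprime f k) / (k ^ s)%:R)%:E < +oo)%E.
Proof.
pose a := fun k : nat => cabs (fprime f k) / (k ^ s)%:R.
have a0 : forall k, 0 <= a k by move=> k; rewrite divr_ge0 ?cabs_ge0 ?ler0n.
have t0 : forall q m, 0 <= a (m * q)%N * cabs (cohen_ramanujan s q (n ^ s)).
  by move=> q m; rewrite mulr_ge0 ?cabs_ge0.
move=> H; apply: le_lt_trans H.
apply: lime_le.
  by apply: is_cvg_nneseries => k _ _; rewrite lee_fin -mulrA mulr_ge0 ?ler0n //; exact: a0.
apply: nearW => K /=.
rewrite sumEFin.
apply: (@le_trans _ _ (\sum_(1 <= q < K)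
    (\sum_(1 <= m < K) a (m * q)%N * cabs (cohen_ramanujan s q (n ^ s)))%:E)%E).
  rewrite sumEFin lee_fin.
  rewrite (eq_bigr (fun k => (2 ^ omega k)%:R * a k)); last by move=> k _; rewrite mulrA.
  exact: fin_bound.
apply: (@le_trans _ _ (\sum_(1 <= q < K) \sum_(1 <= m <oo)
   (a (m * q)%N * cabs (cohen_ramanujan s q (n ^ s)))%:E)%E).
  apply: lee_sum => q _; rewrite -sumEFin.
  by apply: nneseries_lim_ge => m _ _; rewrite lee_fin.
apply: nneseries_lim_ge => q _ _.
by apply: nneseries_ge0 => m _ _; rewrite lee_fin.
Qed.
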